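(* Let $(N_r)_{r\in\mathbb{Z}}$ be the Narayana sequence and for $1\le b\le 4$ and $r\ge 0$ let $S_{N,r}^{(4,b)}=\sum_{k=0}^{r}N_{4k+b}$. Then for every $r\ge 3$, $$S_{N,r}^{(4,b)}=5S_{N,r-1}^{(4,b)}-2S_{N,r-2}^{(4,b)}+S_{N,r-3}^{(4,b)}+c_b,$$ where $c_1=-1$, $c_2=c_4=1$ and $c_3=2$.
   Context: The Narayana sequence $(N_r)_{r\in\mathbb{Z}}$ is defined by $N_0=0$, $N_1=N_2=1$ and $N_r=N_{r-1}+N_{r-3}$ for all integers $r$. *)

(* Defs.v *)
From Stdlib Require Import ZArith.
Open Scope Z_scope.

(* Narayana sequence N_0 = 0, N_1 = N_2 = 1, N_r = N_{r-1} + N_{r-3}.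
   Only nonnegative indices are needed for the statement. *)
Fixpoint narayana (n : nat) : Z :=
  match n with
  | O => 0
  | S O => 1
  | S (S O) => 1
  | S ((S (S m)) as p) => narayana p + narayana m
  end.

Fixpoint S4 (b r : nat) : Z :=
  match r with
  | O => narayana b
  | S r' => S4 b r' + narayana (4 * r + b)
  end.

Definition cb (b : nat) : Z :=
  match b with
  | 1%nat => -1
  | 2%nat => 1
  | 3%nat => 2
  | _ => 1
  end.

(* Main.v *)
Require Import Defs.
From Stdlib Require Import ZArith Lia.
Open Scope Z_scope.

Lemma nar_rec (n : nat) : narayana (n + 3) = narayana (n + 2) + narayana n.
Proof.
  replace (n + 3)%nat with (S (S (S n))) by lia.
  replace (n + 2)%nat with (S (S n)) by lia. reflexivity.
Qed.

Definition P (n : nat) := narayana (n + 12) =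
  5 * narayana (n + 8) - 2 * narayana (n + 4) + narayana n.

Lemma P3 n : P n /\ P (S n) /\ P (S (S n)).
Proof.
  induction n as [|n [H0 [H1 H2]]].
  - unfold P; repeat split; reflexivity.
  - repeat split; try assumption.
    unfold P in *.
    replace (S (S (S n))) with (n + 3)%nat by lia.
    rewrite nar_rec.
    replace (n + 3 + 12)%nat with ((n + 12) + 3)%nat by lia.
    replace (n + 3 + 8)%nat with ((n + 8) + 3)%nat by lia.
    replace (n + 3 + 4)%nat with ((n + 4) + 3)%nat by lia.
    rewrite !nar_rec.
    replace (n + 12 + 2)%nat with (S (S n) + 12)%nat by lia.
    replace (n + 8 + 2)%nat with (S (S n) + 8)%nat by lia.
    replace (n + 4 + 2)%nat with (S (S n) + 4)%nat by lia.
    replace (n + 2)%nat with (S (S n)) by lia.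
    rewrite H2, H0. ring.
Qed.

Lemma Pn n : P n.
Proof. apply P3. Qed.

Lemma S4_succ b r : S4 b (S r) = S4 b r + narayana (4 * S r + b).
Proof. reflexivity. Qed.

Lemma key b r : S4 b (r + 3) - 5 * S4 b (r + 2) + 2 * S4 b (r + 1) - S4 b r
  = S4 b 3 - 5 * S4 b 2 + 2 * S4 b 1 - S4 b 0.
Proof.
  induction r as [|r IH]; [reflexivity|].
  rewrite <- IH.
  replace (S r + 3)%nat with (S (r + 3)) by lia.
  replace (S r + 2)%nat with (S (r + 2)) by lia.
  replace (S r + 1)%nat with (S (r + 1)) by lia.
  rewrite !S4_succ.
  replace (r + 1)%nat with (S r) by lia. rewrite S4_succ.
  pose proof (Pn (4 * S r + b)) as H. unfold P in H.
  replace (4 * S (r + 3) + b)%nat with (4 * S r + b + 12)%nat by lia.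
  replace (4 * S (r + 2) + b)%nat with (4 * S r + b + 8)%nat by lia.
  replace (4 * S (S r) + b)%nat with (4 * S r + b + 4)%nat by lia.
  rewrite H. ring.
Qed.

Theorem theorem7 (b r : nat) :
  (1 <= b <= 4)%nat -> (3 <= r)%nat ->
  S4 b r = 5 * S4 b (r - 1) - 2 * S4 b (r - 2) + S4 b (r - 3) + cb b.
Proof.
  intros Hb Hr.
  destruct (Nat.le_exists_sub 3 r Hr) as [k [-> _]].
  pose proof (key b k) as K.
  replace (k + 3 - 1)%nat with (k + 2)%nat by lia.
  replace (k + 3 - 2)%nat with (k + 1)%nat by lia.
  replace (k + 3 - 3)%nat with k by lia.
  assert (C : S4 b 3 - 5 * S4 b 2 + 2 * S4 b 1 - S4 b 0 = cb b).
  { destruct b as [|[|[|[|[|b]]]]]; try lia; reflexivity. }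
  lia.
Qed.
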